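(* Let $G$ be a graph and $Y$ a minimal blocking set of $G$. Then: (i) $Y$ contains no vertex that belongs to every minimum vertex cover of $G$; (ii) if $Y$ contains a vertex that belongs to no minimum vertex cover of $G$, then $|Y|=1$; (iii) $Y$ is contained in a single connected component of $G$; (iv) $\mathrm{OPT}(G-Y)+|Y|=\mathrm{OPT}(G)+1$.
   Context: $\mathrm{OPT}(G)$ is the minimum vertex cover size; a minimum vertex cover is one of size $\mathrm{OPT}(G)$. $Y\subseteq V(G)$ is a blocking set of $G$ if no minimum vertex cover of $G$ contains $Y$; it is minimal if no proper subset of $Y$ is a blocking set. *)

(* Defs.v *)
(* A finite simple graph G = (T, e) with e : rel T symmetric, irreflexive. *)
From mathcomp Require Import all_boot.
Set Implicit Arguments. Unset Strict Implicit. Unset Printing Implicit Defensive.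

Section VC.
Variables (T : finType) (e : rel T).

Definition vcover_in (V C : {set T}) : bool :=
  (C \subset V) &&
  [forall x in V, forall y in V, e x y ==> (x \in C) || (y \in C)].

(* OPT(G[V]) : minimum size of a vertex cover of G[V] (V itself is a cover,
   so the default #|T| is never the answer unless attained). *)
Definition OPT_in (V : {set T}) : nat :=
  \big[minn/#|T|]_(C : {set T} | vcover_in V C) #|C|.

Definition OPT : nat := OPT_in setT.

Definition OPT_del (Y : {set T}) : nat := OPT_in (~: Y).

Definition min_vcover (C : {set T}) : bool :=
  vcover_in setT C && (#|C| == OPT).

Definition blocking (Y : {set T}) : bool :=
  [forall C : {set T}, min_vcover C ==> ~~ (Y \subset C)].

Definition minimal_blocking (Y : {set T}) : bool :=
  blocking Y && [forall Z : {set T}, (Z \proper Y) ==> ~~ blocking Z].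

End VC.

(* Main.v *)
Require Import Defs.
From mathcomp Require Import all_boot.
From mathcomp Require Import zify.

Section Aux.
Variables (T : finType) (e : rel T).

Lemma bigmin_le_seq (I : eqType) (s : seq I) (P : pred I) (F : I -> nat) d j :
  j \in s -> P j -> \big[minn/d]_(i <- s | P i) F i <= F j.
Proof.
elim: s => //= a s IH; rewrite inE big_cons; case/orP => [/eqP-> Pj | js Pj].
  by rewrite Pj geq_minl.
case: (P a); last exact: IH.
by rewrite geq_min IH ?orbT.
Qed.

Lemma bigmin_att_seq (I : eqType) (s : seq I) (P : pred I) (F : I -> nat) d :
  \big[minn/d]_(i <- s | P i) F i = d \/
  exists j, [/\ j \in s, P j & \big[minn/d]_(i <- s | P i) F i = F j].
Proof.
elim: s => [|a s IH]; first by left; rewrite big_nil.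
rewrite big_cons; case Pa: (P a) => /=; last first.
  case: IH => [->|[j [js Pj ->]]]; first by left.
  by right; exists j; rewrite inE js orbT.
case: (leqP (F a) (\big[minn/d]_(j <- s | P j) F j)) => H.
  by right; exists a; rewrite inE eqxx Pa.
case: IH => [Hd|[j [js Pj Hj]]]; first by left.
by right; exists j; rewrite inE js orbT.
Qed.

Lemma vcoverP (V C : {set T}) : reflect (C \subset V /\
   forall x y, x \in V -> y \in V -> e x y -> (x \in C) || (y \in C))
   (vcover_in e V C).
Proof.
apply: (iffP andP) => [[H1 /forall_inP H2]|[H1 H2]]; split => //.
  by move=> x y xV yV; move: (H2 x xV) => /forall_inP /(_ y yV) /implyP.
by apply/forall_inP => x xV; apply/forall_inP => y yV; apply/implyP; apply: H2.
Qed.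

Lemma OPT_le (V C : {set T}) : vcover_in e V C -> OPT_in e V <= #|C|.
Proof. move=> H; rewrite /OPT_in; apply: bigmin_le_seq => //; exact: mem_index_enum. Qed.

Lemma OPT_att (V : {set T}) : exists C, vcover_in e V C /\ #|C| = OPT_in e V.
Proof.
have HV : vcover_in e V V.
  by apply/vcoverP; split => // x y xV _ _; rewrite xV.
case: (@bigmin_att_seq _ (index_enum {set T}) (vcover_in e V) (fun C : {set T} => #|C|) #|T|)
  => [Hd|[j [_ Pj Hj]]].
  exists V; split => //; apply/eqP; rewrite eqn_leq OPT_le // andbT.
  rewrite /OPT_in Hd; exact: max_card.
by exists j; split.
Qed.

Lemma cover_minus (C Y : {set T}) : vcover_in e setT C -> vcover_in e (~: Y) (C :\: Y).
Proof.
move/vcoverP => [_ H]; apply/vcoverP; split.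
  by apply/subsetP => x; rewrite !inE => /andP[].
move=> x y; rewrite !inE => xY yY /(H x y (in_setT _) (in_setT _)).
by rewrite xY yY.
Qed.

Lemma cover_plus (D Y : {set T}) : vcover_in e (~: Y) D -> vcover_in e setT (D :|: Y).
Proof.
move/vcoverP => [_ H]; apply/vcoverP; split; first exact: subsetT.
move=> x y _ _ exy; rewrite !inE.
case xY: (x \in Y); first by rewrite !orbT.
case yY: (y \in Y); first by rewrite !orbT.
have xY' : x \in ~: Y by rewrite inE xY.
have yY' : y \in ~: Y by rewrite inE yY.
by case/orP: (H x y xY' yY' exy) => ->; rewrite ?orbT.
Qed.

Lemma notblockP (Z : {set T}) : ~~ blocking e Z -> exists C, min_vcover e C /\ Z \subset C.
Proof.
move/forallPn => [C]; rewrite negb_imply negbK => /andP[H1 H2]; by exists C.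
Qed.

End Aux.

Theorem mainTheorem11 (T : finType) (e : rel T)
  (e_sym : symmetric e) (e_irr : irreflexive e) (Y : {set T})
  (hY : minimal_blocking e Y) :
  (* (i) *)
  (forall v, v \in Y -> ~ (forall C : {set T}, min_vcover e C -> v \in C)) /\
  (* (ii) *)
  ((exists2 v, v \in Y & forall C : {set T}, min_vcover e C -> v \notin C) ->
     #|Y| = 1) /\
  (* (iii) *)
  (forall x y, x \in Y -> y \in Y -> connect e x y) /\
  (* (iv) *)
  OPT_del e Y + #|Y| = OPT e + 1.
Proof.
move/andP: hY => [bY /forallP minY0].
have minY : forall Z : {set T}, Z \proper Y -> ~~ blocking e Z.
  by move=> Z; move/implyP: (minY0 Z).
have bYP : forall C : {set T}, min_vcover e C -> ~~ (Y \subset C).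
  by move=> C HC; move/forallP: bY => /(_ C) /implyP; apply.
have bYF : forall C : {set T}, min_vcover e C -> Y \subset C -> False.
  by move=> C HC HS; move: (bYP C HC); rewrite HS.
have sub1 : forall v, v \in Y -> exists C, min_vcover e C /\ Y :\ v \subset C.
  move=> v vY; apply: notblockP; apply: minY.
  by rewrite properD1.
split.
  move=> v vY Hall; have [C [HC sC]] := sub1 v vY.
  apply: (bYF C HC); apply/subsetP => x xY.
  case: (eqVneq x v) => [->|xv]; first exact: Hall.
  by apply: (subsetP sC); rewrite !inE xv.
split.
  move=> [v vY Hv].
  have b1 : blocking e [set v].
    apply/forallP => C; apply/implyP => HC; rewrite sub1set; exact: Hv.
  apply/eqP; rewrite eqn_leq; apply/andP; split; last by rewrite card_gt0; apply/set0Pn; exists v.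
  rewrite leqNgt; apply/negP => H.
  have : [set v] \proper Y.
    rewrite properEcard sub1set vY cards1 //.
  by move/minY; rewrite b1.
split.
  move=> x y xY yY; case: (boolP (connect e x y)) => // nxy; exfalso.
  pose K := [set z | connect e x z].
  have Kcl : forall u w, e u w -> (u \in K) = (w \in K).
    have H1 : forall u w, e u w -> u \in K -> w \in K.
      move=> u w euw; rewrite !inE => xu.
      by apply: connect_trans xu (connect1 euw).
    move=> u w euw; apply/idP/idP; first exact: H1.
    by apply: H1; rewrite e_sym.
  have xK : x \in K by rewrite inE connect0.
  have yK : y \notin K by rewrite inE.
  clearbody K.
  have [C1 [/andP[HC1 /eqP cC1] s1]] : exists C, min_vcover e C /\ Y :&: K \subset C.
    apply: notblockP; apply: minY; apply/properP; split; first exact: subsetIl.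
    by exists y => //; rewrite in_setI negb_and yK orbT.
  have [C2 [/andP[HC2 /eqP cC2] s2]] : exists C, min_vcover e C /\ Y :\: K \subset C.
    apply: notblockP; apply: minY; apply/properP; split; first exact: subsetDl.
    by exists x => //; rewrite in_setD xK.
  have mk : forall A B, vcover_in e setT A -> vcover_in e setT B ->
       vcover_in e setT ((A :&: K) :|: (B :\: K)).
    move=> A B /vcoverP [_ HA] /vcoverP [_ HB]; apply/vcoverP; split; first exact: subsetT.
    move=> u w _ _ euw; have wK := Kcl u w euw.
    rewrite !in_setU !in_setI !in_setD -wK.
    case: (u \in K) => /=; rewrite ?andbT ?andbF ?orbF /=.
      exact: HA.
    exact: HB.
  set C := (C1 :&: K) :|: (C2 :\: K).
  set C' := (C2 :&: K) :|: (C1 :\: K).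
  have cov := mk _ _ HC1 HC2.
  have cov' := mk _ _ HC2 HC1.
  have hC : forall A B, #|(A :&: K) :|: (B :\: K)| = #|A :&: K| + #|B :\: K|.
    move=> A B; rewrite -(cardsID K ((A :&: K) :|: (B :\: K))); congr (_ + _).
      apply: eq_card => z; rewrite !inE; by case: (z \in K); rewrite ?andbF ?andbT ?orbF.
    apply: eq_card => z; rewrite !inE; by case: (z \in K); rewrite ?andbF ?andbT ?orbF.
  have l1 := OPT_le _ _ _ _ cov; have l2 := OPT_le _ _ _ _ cov'.
  rewrite /C /C' !hC in l1 l2.
  have e1 := cardsID K C1; have e2 := cardsID K C2.
  have eqC : #|C| = OPT e by rewrite /C hC; rewrite /OPT in cC1 cC2 *; lia.
  apply: (bYF C).
    by rewrite /min_vcover cov eqC eqxx.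
  apply/subsetP => z zY; rewrite !in_setU !in_setI !in_setD; case zK: (z \in K) => /=.
    by rewrite (subsetP s1) // in_setI zY zK.
  by rewrite (subsetP s2) // ?orbT // in_setD zY zK.
have [D [HD cD]] := OPT_att _ e (~: Y).
have lo : OPT e + 1 <= OPT_del e Y + #|Y|.
  have cov := cover_plus _ _ _ _ HD.
  have l := OPT_le _ _ _ _ cov.
  have hs : #|D :|: Y| <= #|D| + #|Y| by rewrite cardsU leq_subr.
  rewrite /OPT_del -cD; rewrite leqNgt; apply/negP => H.
  apply: (bYF (D :|: Y)); last exact: subsetUr.
  rewrite /min_vcover cov /=; apply/eqP; rewrite /OPT in l H *; lia.
have [y yY] : exists y, y \in Y.
  apply/set0Pn; apply/negP => /eqP Y0.
  have [C [HC cC]] := OPT_att _ e setT.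
  apply: (bYF C); first by rewrite /min_vcover HC cC eqxx.
  by rewrite Y0 sub0set.
have [C [/andP[HC /eqP cC] sC]] := sub1 y yY.
have l := OPT_le _ _ _ _ (cover_minus _ _ _ Y HC).
have e1 := cardsID Y C.
have hI : #|Y :\ y| <= #|C :&: Y|.
  apply: subset_leq_card; apply/subsetP => z zY; rewrite inE (subsetP sC) //.
  by move: zY; rewrite !inE => /andP[].
have hY1 := cardsD1 y Y; rewrite yY in hY1.
rewrite /OPT_del; rewrite /OPT in cC lo *; rewrite /OPT_del in lo.
lia.
Qed.
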